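(* Let $X$ be a finite-dimensional real Hilbert space, $Y$ a real Hilbert space, and $\mathsf{K_h}: X \to Y$ a linear operator. Let $\{\phi_1,\dots,\phi_n\}$ be an orthonormal basis of $X$ such that $\mathsf{K_h}\phi_i \neq c\,\mathsf{K_h}\phi_j$ for all $i \neq j$ and all $c \in \mathbb{R}$. Define the linear operator $\mathsf{W}: X\to X$ by $\mathsf{W}\phi_i = \|\mathsf{P}\phi_i\|_X\,\phi_i$ for $i=1,\dots,n$, where $\mathsf{P}$ is the orthogonal projection of $X$ onto $\mathcal{N}(\mathsf{K_h})^\perp$. (Then $\|\mathsf{P}\phi_i\|_X > 0$ for all $i$, so $\mathsf{W}$ is invertible.) Fix $j \in \{1,\dots,n\}$ and let $x_j^*$ be the minimum norm least squares solution of $\mathsf{K_h}x = \mathsf{K_h}\phi_j$. Write $\mathsf{W}^{-1}x_j^* = \sum_{i=1}^n c_i \phi_i$. Then $j$ is the unique index maximizing $c_i$, i.e. $c_j > c_i$ for all $i\neq j$.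
   Context: $\mathcal{N}(\mathsf{K_h})$ is the nullspace of $\mathsf{K_h}$ and $\mathcal{N}(\mathsf{K_h})^\perp$ its orthogonal complement in $X$. The minimum norm least squares solution of $\mathsf{K_h}x=b$ is the element of smallest norm among the minimizers of $\|\mathsf{K_h}x-b\|_Y$, i.e. $\mathsf{K_h}^\dagger b$ with $\mathsf{K_h}^\dagger$ the Moore–Penrose inverse. *)

(* Defs.v *)
From mathcomp Require Import all_boot all_order all_algebra.
From mathcomp Require Import reals.
Set Implicit Arguments. Unset Strict Implicit. Unset Printing Implicit Defensive.
Import Order.TTheory GRing.Theory Num.Theory.
Local Open Scope ring_scope.

Definition is_inner_product (R : realType) (V : lmodType R) (ip : V -> V -> R) : Prop :=
  [/\ (forall x y, ip x y = ip y x),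
      (forall a x y z, ip (a *: x + y) z = a * ip x z + ip y z),
      (forall x, 0 <= ip x x) &
      (forall x, ip x x = 0 -> x = 0)].

Definition ipnorm (R : realType) (V : lmodType R) (ip : V -> V -> R) (x : V) : R :=
  Num.sqrt (ip x x).

Definition ip_complete (R : realType) (V : lmodType R) (ip : V -> V -> R) : Prop :=
  forall u : nat -> V,
    (forall e : R, 0 < e -> exists N : nat, forall m n : nat, (N <= m)%N -> (N <= n)%N ->
        ipnorm ip (u m - u n) < e) ->
    exists l : V, forall e : R, 0 < e -> exists N : nat, forall n : nat, (N <= n)%N ->
        ipnorm ip (u n - l) < e.

Definition is_hilbert (R : realType) (V : lmodType R) (ip : V -> V -> R) : Prop :=
  is_inner_product ip /\ ip_complete ip.

Definition nullspace (R : realType) (X Y : lmodType R) (K : X -> Y) (x : X) : Prop :=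
  K x = 0.

Definition orth_compl (R : realType) (X : lmodType R) (ipX : X -> X -> R)
  (S : X -> Prop) (x : X) : Prop :=
  forall z, S z -> ipX x z = 0.

Definition is_orth_proj (R : realType) (X : lmodType R) (ipX : X -> X -> R)
  (M : X -> Prop) (P : X -> X) : Prop :=
  forall x, M (P x) /\ (forall z, M z -> ipX (x - P x) z = 0).

Definition is_orthonormal_basis (R : realType) (X : lmodType R) (ipX : X -> X -> R)
  (n : nat) (phi : 'I_n -> X) : Prop :=
  (forall i j : 'I_n, ipX (phi i) (phi j) = (i == j)%:R) /\
  (forall x : X, exists c : 'I_n -> R, x = \sum_(i < n) c i *: phi i).

Definition is_ls_solution (R : realType) (X Y : lmodType R) (ipY : Y -> Y -> R)
  (K : X -> Y) (b : Y) (x : X) : Prop :=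
  forall z : X, ipnorm ipY (K x - b) <= ipnorm ipY (K z - b).

Definition is_min_norm_ls_solution (R : realType) (X Y : lmodType R)
  (ipX : X -> X -> R) (ipY : Y -> Y -> R) (K : X -> Y) (b : Y) (x : X) : Prop :=
  is_ls_solution ipY K b x /\
  (forall z : X, is_ls_solution ipY K b z -> ipnorm ipX x <= ipnorm ipX z).

(* Main.v *)
Require Import Defs.
From mathcomp Require Import all_boot all_order all_algebra.
From mathcomp Require Import reals.
From mathcomp Require Import ring lra.
Import Order.TTheory GRing.Theory Num.Theory.
Set Implicit Arguments. Unset Strict Implicit.
Local Open Scope ring_scope.

Section IP.
Variables (R : realType) (V : lmodType R) (ip : V -> V -> R).
Hypothesis H : is_inner_product ip.

Lemma ip_sym x y : ip x y = ip y x. Proof. by case: H. Qed.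
Lemma ip_lin a x y z : ip (a *: x + y) z = a * ip x z + ip y z. Proof. by case: H. Qed.
Lemma ip_ge0 x : 0 <= ip x x. Proof. by case: H. Qed.
Lemma ip_eq0 x : ip x x = 0 -> x = 0. Proof. by case: H => _ _ _; apply. Qed.
Lemma ip0l z : ip 0 z = 0.
Proof.
have := ip_lin 1 0 0 z; rewrite scale1r addr0 mul1r => h.
by apply: (@addrI _ (ip 0 z)); rewrite addr0 -h.
Qed.
Lemma ip0r z : ip z 0 = 0. Proof. by rewrite ip_sym ip0l. Qed.
Lemma ipDl x y z : ip (x + y) z = ip x z + ip y z.
Proof. by have := ip_lin 1 x y z; rewrite scale1r mul1r. Qed.
Lemma ipZl a x z : ip (a *: x) z = a * ip x z.
Proof. by have := ip_lin a x 0 z; rewrite addr0 ip0l addr0. Qed.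
Lemma ipBl x y z : ip (x - y) z = ip x z - ip y z.
Proof. by rewrite ipDl -scaleN1r ipZl mulN1r. Qed.
Lemma ipDr x y z : ip z (x + y) = ip z x + ip z y.
Proof. by rewrite !(ip_sym z) ipDl. Qed.
Lemma ipZr a x z : ip z (a *: x) = a * ip z x.
Proof. by rewrite !(ip_sym z) ipZl. Qed.
Lemma ipBr x y z : ip z (x - y) = ip z x - ip z y.
Proof. by rewrite !(ip_sym z) ipBl. Qed.
Lemma ip_suml (I : Type) (r : seq I) (F : I -> V) z :
  ip (\sum_(i <- r) F i) z = \sum_(i <- r) ip (F i) z.
Proof. exact: (big_morph (fun x => ip x z) (fun x y => ipDl x y z) (ip0l z)). Qed.
Lemma ip_sumr (I : Type) (r : seq I) (F : I -> V) z :
  ip z (\sum_(i <- r) F i) = \sum_(i <- r) ip z (F i).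
Proof. rewrite ip_sym ip_suml; apply: eq_bigr => i _; exact: ip_sym. Qed.
Lemma ip_norm0 x : ipnorm ip x <= 0 -> x = 0.
Proof.
move=> h; apply: ip_eq0.
have : Num.sqrt (ip x x) == 0 by rewrite eq_le h sqrtr_ge0.
by rewrite sqrtr_eq0 => hle; apply/eqP; rewrite eq_le hle ip_ge0.
Qed.
Lemma ip_pos x : x != 0 -> 0 < ip x x.
Proof. by move=> hx; rewrite lt_def ip_ge0 andbT; apply: contra hx => /eqP/ip_eq0 ->. Qed.
End IP.

Theorem theorem1 (R : realType) (X Y : lmodType R)
  (ipX : X -> X -> R) (ipY : Y -> Y -> R)
  (n : nat) (phi : 'I_n -> X)
  (K : {linear X -> Y}) (P W : X -> X) (j : 'I_n) (xstar : X) :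
  is_hilbert ipX ->
  is_hilbert ipY ->
  is_orthonormal_basis ipX phi ->
  (forall (i k : 'I_n) (c : R), i != k -> K (phi i) <> c *: K (phi k)) ->
  is_orth_proj ipX (orth_compl ipX (nullspace K)) P ->
  linear W ->
  (forall i : 'I_n, W (phi i) = ipnorm ipX (P (phi i)) *: phi i) ->
  is_min_norm_ls_solution ipX ipY K (K (phi j)) xstar ->
  forall c : 'I_n -> R, W (\sum_(i < n) c i *: phi i) = xstar ->
  forall i : 'I_n, i != j -> c i < c j.
Proof.
move=> [hX _] [hY _] [orth basis] hK hP linW hW [ls mn] c hc i hij.
have coord : forall (u : 'I_n -> R) k,
    ipX (phi k) (\sum_(l < n) u l *: phi l) = u k.
  move=> u k; rewrite (ip_sumr hX) (bigD1 k) //= big1 ?addr0.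
    by rewrite (ipZr hX) orth eqxx mulr1.
  by move=> l hl; rewrite (ipZr hX) orth eq_sym (negbTE hl) mulr0.
have KP : forall v, K (P v) = K v.
  move=> v; have [_ orthw] := hP v.
  pose g := \sum_(l < n) ipY (K (v - P v)) (K (phi l)) *: phi l.
  have gz : forall z, ipX g z = ipY (K (v - P v)) (K z).
    move=> z; have [u ->] := basis z.
    rewrite (ip_suml hX) linear_sum (ip_sumr hY); apply: eq_bigr => l _.
    by rewrite (ipZl hX) coord linearZ (ipZr hY) mulrC.
  have gM : orth_compl ipX (nullspace K) g.
    by move=> z; rewrite /nullspace => Kz; rewrite gz Kz (ip0r hY).
  have := orthw g gM; rewrite (ip_sym hX) gz => /(ip_eq0 hY)/eqP.
  by rewrite linearB subr_eq0 eq_sym => /eqP.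
have Kx : K xstar = K (phi j).
  have := ls (phi j); rewrite subrr /ipnorm (ip0l hY) sqrtr0 => h.
  by apply/eqP; rewrite -subr_eq0; apply/eqP; apply: (ip_norm0 hY).
have xP : xstar = P (phi j).
  have [pM _] := hP (phi j).
  have lsp : is_ls_solution ipY K (K (phi j)) (P (phi j)).
    by move=> z; rewrite KP subrr /ipnorm (ip0l hY) sqrtr0 sqrtr_ge0.
  have := mn _ lsp; rewrite /ipnorm ler_sqrt ?(ip_ge0 hX) //.
  have Kn : K (xstar - P (phi j)) = 0 by rewrite linearB Kx KP subrr.
  have h0 := pM _ Kn.
  have e : ipX xstar xstar = ipX (xstar - P (phi j)) (xstar - P (phi j))
      + 2 * ipX (P (phi j)) (xstar - P (phi j)) + ipX (P (phi j)) (P (phi j)).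
    rewrite !(ipBl hX) !(ipBr hX) (ip_sym hX (P (phi j)) xstar); ring.
  rewrite e h0 => hle.
  have hn : ipX (xstar - P (phi j)) (xstar - P (phi j)) = 0.
    have := ip_ge0 hX (xstar - P (phi j)); lra.
  by apply/eqP; rewrite -subr_eq0; apply/eqP; apply: (ip_eq0 hX).
have xM : orth_compl ipX (nullspace K) xstar by rewrite xP; case: (hP (phi j)).
have W0 : W 0 = 0.
  have := linW 1 0 0; rewrite !scale1r addr0 => h.
  by apply: (@addrI _ (W 0)); rewrite addr0 -h.
have WD : forall u v, W (u + v) = W u + W v.
  by move=> u v; have := linW 1 u v; rewrite !scale1r.
have WZ : forall a u, W (a *: u) = a *: W u.
  by move=> a u; have := linW a u 0; rewrite !addr0 W0 addr0.
have Wsum : W (\sum_(l < n) c l *: phi l) =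
    \sum_(l < n) (c l * ipnorm ipX (P (phi l))) *: phi l.
  rewrite (big_morph W WD W0); apply: eq_bigr => l _.
  by rewrite WZ hW scalerA.
have cf : forall k, c k * ipnorm ipX (P (phi k)) = ipX xstar (P (phi k)).
  move=> k; rewrite -(coord (fun l => c l * ipnorm ipX (P (phi l)))) -Wsum hc.
  have [_ o] := hP (phi k); have h := o xstar xM.
  rewrite (ipBl hX) in h.
  rewrite (ip_sym hX xstar (P (phi k))); lra.
set a := ipnorm ipX xstar.
have xnz : xstar != 0.
  apply/eqP => x0; apply: (hK j i 0); first by rewrite eq_sym.
  by rewrite scale0r -Kx x0 linear0.
have apos : 0 < a by rewrite /a /ipnorm sqrtr_gt0 (ip_pos hX).
have a2 : a ^+ 2 = ipX xstar xstar by rewrite /a /ipnorm sqr_sqrtr ?(ip_ge0 hX).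
have cj : c j = a.
  have := cf j; rewrite -xP -/a => h.
  apply: (@mulIf _ a); first by rewrite gt_eqF.
  by rewrite /= h -a2 expr2.
rewrite cj.
set q := P (phi i).
set b := ipnorm ipX q.
have qnz : q != 0.
  apply/eqP => q0; apply: (hK i j 0 hij).
  by rewrite scale0r -KP -/q q0 linear0.
have bpos : 0 < b by rewrite /b /ipnorm sqrtr_gt0 (ip_pos hX).
have b2 : b ^+ 2 = ipX q q by rewrite /b /ipnorm sqr_sqrtr ?(ip_ge0 hX).
have ci := cf i; rewrite -/q -/b in ci.
rewrite ltNge; apply/negP => hle.
have hge : a * b <= ipX xstar q.
  by rewrite -ci ler_wpM2r // ltW.
have hd : ipX (b *: xstar - a *: q) (b *: xstar - a *: q) <= 0.
  rewrite !(ipBl hX) !(ipBr hX) !(ipZl hX) !(ipZr hX) (ip_sym hX q xstar).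
  rewrite -a2 -b2.
  have : 0 <= a * b * (ipX xstar q - a * b).
    by rewrite mulr_ge0 ?subr_ge0 // mulr_ge0 // ltW.
  nra.
have hd0 : b *: xstar - a *: q = 0.
  apply: (ip_eq0 hX); apply/eqP; rewrite eq_le hd ip_ge0 //.
have qe : q = (b / a) *: xstar.
  move/eqP: hd0; rewrite subr_eq0 => /eqP hbq.
  rewrite mulrC -scalerA hbq scalerA mulVf ?scale1r // gt_eqF //.
apply: (hK i j (b / a) hij).
rewrite -(KP (phi i)) -/q qe linearZ Kx //.
Qed.
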